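(* Let $p$ be a real homogeneous polynomial of degree $N$ on $\mathbb{R}^n$ with all coefficients $\ge0$, $p(1,\dots,1)=1$, and $\frac{\partial p}{\partial x_1}(e)=\cdots=\frac{\partial p}{\partial x_n}(e)=k>0$ where $e=(1,\dots,1)$ ($p$ need not be symmetric). Then for every positive definite $A=(a_{ij})\in\mathrm{Sym}^2(\mathbb{R}^n)$: (i) $p(a_{11},a_{22},\dots,a_{nn})^{1/N}\ge(\det A)^{1/n}$; (ii) $p(\lambda_1(A),\dots,\lambda_n(A))^{1/N}\ge(\det A)^{1/n}$, where $\lambda_1(A)\le\lambda_2(A)\le\cdots\le\lambda_n(A)$ are the eigenvalues of $A$ in increasing order.
   Context: $\mathrm{Sym}^2(\mathbb{R}^n)$ is the space of real symmetric $n\times n$ matrices. *)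

(* Defs.v *)
From mathcomp Require Import all_boot all_algebra.
From mathcomp Require Import mpoly.
From mathcomp Require Import reals exp.
Set Implicit Arguments.
Unset Strict Implicit.
Unset Printing Implicit Defensive.
Import GRing.Theory Num.Theory.
Local Open Scope ring_scope.

Definition symmetricmx (R : realType) (n : nat) (A : 'M[R]_n) : Prop :=
  A^T = A.

Definition posdefmx (R : realType) (n : nat) (A : 'M[R]_n) : Prop :=
  symmetricmx A /\ forall x : 'cV[R]_n, x != 0 -> 0 < (x^T *m A *m x) ord0 ord0.

Definition sorted_eigenvalues (R : realType) (n : nat) (A : 'M[R]_n)
    (lam : 'I_n -> R) : Prop :=
  (forall i j : 'I_n, (i <= j)%N -> lam i <= lam j) /\
  char_poly A = \prod_(i < n) ('X - (lam i)%:P).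

Definition onesv (R : realType) (n : nat) : 'I_n -> R := fun _ => 1.

(* Main.v *)
Require Import Defs.
From mathcomp Require Import all_boot all_algebra.
From mathcomp Require Import mpoly.
From mathcomp Require Import order reals exp.
Import Order.TTheory GRing.Theory Num.Theory.
Local Open Scope ring_scope.
Set Implicit Arguments.
Lemma sum_pos (R : realType) (I : Type) (s : seq I) (c y : I -> R) :
  (forall i, 0 <= c i) -> (forall i, 0 < y i) -> 0 < \sum_(i <- s) c i ->
  0 < \sum_(i <- s) c i * y i.
Proof.
move=> c0 y0; elim: s => [|a s IH]; first by rewrite big_nil ltxx.
rewrite !big_cons => h.
have hr : 0 <= \sum_(i <- s) c i * y i by apply: sumr_ge0 => i _; rewrite mulr_ge0 // ltW.
have [ca|] := ltrP 0 (c a).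
  by apply: ltr_pwDl => //; rewrite mulr_gt0.
move=> ca; have ca0 : c a = 0 by apply/eqP; rewrite eq_le ca c0.
rewrite ca0 mul0r add0r; apply: IH; by rewrite ca0 add0r in h.
Qed.

Lemma amgm_ln (R : realType) (I : Type) (s : seq I) (c y : I -> R) :
  (forall i, 0 <= c i) -> (forall i, 0 < y i) -> \sum_(i <- s) c i = 1 ->
  \sum_(i <- s) c i * ln (y i) <= ln (\sum_(i <- s) c i * y i).
Proof.
move=> c0 y0 c1.
set S := \sum_(i <- s) c i * y i.
have S0 : 0 < S by apply: sum_pos => //; rewrite c1 ltr01.
have key : forall i, c i * ln (y i) <= c i * ln S + c i * (y i / S - 1).
  move=> i; rewrite -mulrDr ler_wpM2l //.
  have yS : 0 < y i / S by rewrite divr_gt0.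
  have e : y i = S * (y i / S) by rewrite mulrC divfK // gt_eqF.
  rewrite {1}e lnM ?posrE // lerD2l.
  have := expR_ge1Dx (ln (y i / S)); rewrite lnK ?posrE //.
  by move=> h; rewrite lerBrDl.
apply: le_trans (ler_sum _ (fun i _ => key i)) _.
rewrite big_split /= -mulr_suml c1 mul1r.
have -> : \sum_(i <- s) c i * (y i / S - 1) = 0.
  under eq_bigr do rewrite mulrBr mulr1 mulrA.
  by rewrite sumrB -mulr_suml c1 divff ?gt_eqF // subrr.
by rewrite addr0.
Qed.
Lemma ln_prod (R : realType) (I : Type) (r : seq I) (F : I -> R) :
  (forall i, 0 < F i) -> ln (\prod_(i <- r) F i) = \sum_(i <- r) ln (F i).
Proof.
move=> F0; elim: r => [|a r IH]; first by rewrite !big_nil ln1.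
rewrite !big_cons lnM ?posrE ?IH //; exact: prodr_gt0.
Qed.

Lemma deriv_ones (R : realType) (n : nat) (p : {mpoly R[n]}) (i : 'I_n) :
  (p^`M(i)).@[@onesv R n] = \sum_(m <- msupp p) p@_m * (m i)%:R.
Proof.
rewrite {1}(mpolyE p) (big_morph (mderiv i) (@mderivD _ _ i) (@mderiv0 _ _ i)) (big_morph _ (mevalD _) (meval0 _)); apply: eq_bigr => m _.
rewrite mderivZ mderivX !mevalZ mevalX.
by rewrite (eq_bigr (fun _ => 1)) ?big1_eq ?mulr1 // => j _; rewrite /onesv expr1n.
Qed.

Lemma eval_ones (R : realType) (n : nat) (p : {mpoly R[n]}) :
  p.@[@onesv R n] = \sum_(m <- msupp p) p@_m.
Proof.
rewrite mevalE; apply: eq_bigr => m _.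
by rewrite (eq_bigr (fun _ => 1)) ?big1_eq ?mulr1 // => j _; rewrite /onesv expr1n.
Qed.

Lemma poly_key (R : realType) (n N : nat) (p : {mpoly R[n]}) (k : R) :
  p \is N.-homog -> (forall m, 0 <= p@_m) -> p.@[@onesv R n] = 1 ->
  (forall i : 'I_n, (p^`M(i)).@[@onesv R n] = k) ->
  n%:R * k = N%:R /\ forall x : 'I_n -> R, (forall i, 0 < x i) ->
     0 < p.@[x] /\ k * \sum_i ln (x i) <= ln p.@[x].
Proof.
move=> hom c0 h1 hd.
have c1 : \sum_(m <- msupp p) p@_m = 1 by rewrite -eval_ones.
have hk : forall i, k = \sum_(m <- msupp p) p@_m * (m i)%:R.
  by move=> i; rewrite -(hd i) deriv_ones.
split.
  rewrite mulr_natl -[n in k *+ n]card_ord -sumr_const.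
  rewrite (eq_bigr (fun i => \sum_(m <- msupp p) p@_m * (m i)%:R)); last by move=> i _; exact: hk.
  have -> : (N%:R : R) = \sum_(m <- msupp p) p@_m * N%:R by rewrite -mulr_suml c1 mul1r.
  rewrite exchange_big /=.
  apply: eq_big_seq => m hm.
  rewrite -mulr_sumr -natr_sum -mdegE.
  by rewrite (dhomog_mf hom hm).
move=> x x0.
have y0 : forall m : 'X_{1..n}, 0 < \prod_i x i ^+ m i.
  by move=> m; apply: prodr_gt0 => i _; rewrite exprn_gt0.
rewrite mevalE; split; first by apply: sum_pos => //; rewrite c1 ltr01.
apply: le_trans (@amgm_ln _ _ (msupp p) (fun m => p@_m) (fun m => \prod_i x i ^+ m i) c0 y0 c1).
rewrite mulr_sumr (eq_bigr (fun i => \sum_(m <- msupp p) p@_m * (m i)%:R * ln (x i))); last first.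
  by move=> i _; rewrite (hk i) mulr_suml.
rewrite exchange_big /=; rewrite le_eqVlt; apply/orP; left; apply/eqP; apply: eq_bigr => m _.
rewrite ln_prod; last by move=> i; rewrite exprn_gt0.
rewrite mulr_sumr; apply: eq_bigr => i _.
by rewrite lnXn // -mulrA mulr_natl.
Qed.
Lemma pd_diag (R : realType) (n : nat) (A : 'M[R]_n) :
  posdefmx A -> forall i, 0 < A i i.
Proof.
move=> [_ hA] i.
have hx : (delta_mx i 0 : 'cV[R]_n) != 0.
  apply/negP => /eqP/matrixP/(_ i 0); rewrite !mxE !eqxx /=.
  by move/eqP; rewrite oner_eq0.
have := hA _ hx.
by rewrite trmx_delta -rowE -colE !mxE.
Qed.

Lemma schur_step (R : realType) (n : nat) (A : 'M[R]_(1 + n)) :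
  (forall B : 'M[R]_n, posdefmx B -> 0 < \det B /\ \det B <= \prod_i B i i) ->
  posdefmx A -> 0 < \det A /\ \det A <= \prod_i A i i.
Proof.
move=> IH hA.
have al0 : 0 < A 0 0 := pd_diag hA 0.
have [sA pA] := hA.
set al := A 0 0.
set b := ursubmx A; set c := dlsubmx A; set C := drsubmx A.
have ea : ulsubmx A = al%:M.
  rewrite [LHS]mx11_scalar; congr (_%:M); rewrite !mxE /al; congr (A _ _); exact: val_inj.
have ec : c = b^T by rewrite /c /b trmx_ursub sA.
have eC : C^T = C by rewrite /C trmx_drsub sA.
have eA : A = block_mx al%:M b c C by rewrite -ea submxK.
set S := C - al^-1 *: (c *m b).
have dA : \det A = al * \det S.
  pose L : 'M[R]_(1 + n) := block_mx 1%:M 0 (- al^-1 *: c) 1%:M.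
  have dL : \det L = 1 by rewrite /L det_lblock !det1 mulr1.
  have LA : L *m A = block_mx al%:M b 0 S.
    rewrite eA /L mulmx_block !mul1mx !mul0mx !addr0. congr block_mx.
      by rewrite -scalemxAl mul_mx_scalar scalerA mulNr mulVf ?gt_eqF // scaleN1r addNr.
    by rewrite /S addrC -scalemxAl scaleNr.
  by rewrite -[\det A]mul1r -dL -det_mulmx LA det_ublock det_mx11 mxE eqxx mulr1n.
have pS : posdefmx S.
  split.
    apply/matrixP => i j; rewrite /S !mxE; congr (_ - _ * _).
      by rewrite -{2}sA mxE.
    rewrite !big_ord1 ec !mxE; exact: mulrC.
  move=> x x0.
  pose u : 'cV[R]_1 := - al^-1 *: (b *m x).
  pose y : 'cV[R]_(1 + n) := col_mx u x.
  have y0 : y != 0.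
    apply: contraNneq x0 => hy; by rewrite -(col_mxKd u x) -/y hy linear0.
  have := pA y y0.
  rewrite eA /y tr_col_mx -mulmxA mul_block_col mul_row_col.
  have -> : al%:M *m u + b *m x = 0.
    by rewrite mul_scalar_mx /u scalerA mulrN mulfV ?gt_eqF // scaleN1r addNr.
  rewrite mulmx0 add0r -mulmxA.
  suff -> : c *m u + C *m x = S *m x by [].
  by rewrite /u /S -scalemxAr scaleNr mulmxA mulmxDl mulNmx -scalemxAl addrC.
have [dS0 dSle] := IH S pS.
split; first by rewrite dA mulr_gt0.
rewrite dA big_ord_recl; apply: ler_pM => //; first exact: ltW.
  exact: ltW.
apply: le_trans dSle _; apply: ler_prod => i _.
rewrite (ltW (pd_diag pS i)) /=.
have -> : A (lift ord0 i) (lift ord0 i) = C i i.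
  by rewrite /C !mxE; congr (A _ _); apply: val_inj.
rewrite /S !mxE lerBlDr lerDl; apply: mulr_ge0; first by rewrite invr_ge0 ltW.
rewrite big_ord1 ec !mxE; exact: sqr_ge0.
Qed.

Lemma hadamard (R : realType) (n : nat) (A : 'M[R]_n) :
  posdefmx A -> 0 < \det A /\ \det A <= \prod_i A i i.
Proof.
elim: n A => [|n IH] A hA.
  by rewrite det_mx00 big_ord0 ltr01 lexx.
exact: (@schur_step R n A IH hA).
Qed.
Lemma det_eig (R : realType) (n : nat) (A : 'M[R]_n) (lam : 'I_n -> R) :
  char_poly A = \prod_(i < n) ('X - (lam i)%:P) -> \det A = \prod_i lam i.
Proof.
move=> hc.
have := char_poly_det A; rewrite -horner_coef0 hc horner_prod.
under eq_bigr do rewrite hornerXsubC sub0r.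
rewrite prodrN card_ord => h.
have s1 : ((-1) ^+ n * (-1) ^+ n : R) = 1 by rewrite -exprMn mulrNN mulr1 expr1n.
by rewrite -[\det A]mul1r -s1 -mulrA -h mulrA s1 mul1r.
Qed.

Lemma eig_pos (R : realType) (n : nat) (A : 'M[R]_n) (lam : 'I_n -> R) :
  posdefmx A -> char_poly A = \prod_(i < n) ('X - (lam i)%:P) -> forall i, 0 < lam i.
Proof.
move=> [sA pA] hc i.
have : eigenvalue A (lam i).
  rewrite eigenvalue_root_char hc /root horner_prod (bigD1 i) //=.
  by rewrite hornerXsubC subrr mul0r.
move/eigenvalueP => [v hv v0].
have x0 : v^T != 0 by apply: contraNneq v0 => h; rewrite -[v]trmxK h trmx0.
have := pA _ x0; rewrite trmxK hv -scalemxAl mxE.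
have s0 : 0 <= (v *m v^T) ord0 ord0.
  by rewrite mxE; apply: sumr_ge0 => j _; rewrite mxE; rewrite -expr2 sqr_ge0.
move=> h; move: s0; rewrite le_eqVlt => /orP [/eqP s0|s0].
  by move: h; rewrite -s0 mulr0 ltxx.
by rewrite -(pmulr_lgt0 _ s0).
Qed.

Lemma fin_step (R : realType) (n N : nat) (k P D : R) :
  n%:R * k = N%:R -> 0 < k -> (0 < n)%N -> 0 < P -> 0 < D -> k * ln D <= ln P ->
  powR D (n%:R^-1) <= powR P (N%:R^-1).
Proof.
move=> hnk k0 n0 P0 D0 h.
rewrite /powR !gt_eqF // ler_expR -hnk.
have n0' : (n%:R : R) != 0 by rewrite pnatr_eq0 -lt0n.
apply: le_trans (ler_wpM2l _ h); last by rewrite invr_ge0 mulr_ge0 // ltW // ltr0n.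
by rewrite invfM -mulrA mulKf ?gt_eqF.
Qed.

Unset Implicit Arguments.

Theorem mainTheorem13 (R : realType) (n N : nat) (p : {mpoly R[n]}) (k : R) :
  p \is N.-homog ->
  (forall m, 0 <= p@_m) ->
  p.@[@onesv R n] = 1 ->
  0 < k ->
  (forall i : 'I_n, (p^`M(i)).@[@onesv R n] = k) ->
  forall A : 'M[R]_n, posdefmx A ->
    powR (p.@[fun i => A i i]) (N%:R^-1) >= powR (\det A) (n%:R^-1)
    /\ (forall lam : 'I_n -> R, sorted_eigenvalues A lam ->
          powR (p.@[lam]) (N%:R^-1) >= powR (\det A) (n%:R^-1)).
Proof.
move=> hom c0 h1 k0 hd A hA.
have [hnk hx] := @poly_key R n N p k hom c0 h1 hd.
case: (posnP n) => [n0|n0].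
  have N0 : (N%:R : R) = 0 by rewrite -hnk n0 mul0r.
  have n0' : (n%:R : R) = 0 by rewrite n0.
  by rewrite N0 n0' invr0; split => [|lam _]; rewrite !powRr0.
have [D0 Dle] := hadamard hA.
split.
  have x0 : forall i, 0 < A i i := pd_diag hA.
  have [P0 hP] := hx _ x0.
  apply: (@fin_step R n N k _ _ hnk k0 n0 P0 D0); apply: le_trans hP.
  apply: ler_wpM2l; first exact: ltW.
  rewrite -ln_prod // ler_ln ?posrE //; exact: prodr_gt0.
move=> lam [_ hc].
have l0 := @eig_pos R n A lam hA hc.
have [P0 hP] := hx _ l0.
apply: (@fin_step R n N k _ _ hnk k0 n0 P0 D0); apply: le_trans hP.
by rewrite (@det_eig R n A lam hc) ln_prod.
Qed.
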